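(* Let $\gamma\ge 2$ be an integer, $\delta>0$, and let $\mu$ range over an arbitrary parameter set. Let $F(\rho,\mu)$ be complex valued and, for each $\mu$, smooth in $\rho\in[0,\delta)$; set $a_j(\mu)=\partial_\rho^jF(0,\mu)/j!$. Assume (F1) $a_0(\mu)=a_1(\mu)=0$ for all $\mu$; (F2) there is $C>0$ with $\sum_{j=2}^{\gamma}|a_j(\mu)|\ge C$ for all $\mu$; (F3) for each $\mu$, $|\partial_\rho F(\rho,\mu)|$ is increasing in $\rho$ for $0<\rho<\delta$; (F4') for every $k\in\mathbb{N}$, $\partial_\rho^kF(\rho,\mu)$ is bounded uniformly in $0<\rho<\delta$ and $\mu$. Then, provided $\delta$ is sufficiently small, there exist constants $C>0$ and $C_m>0$ ($m\in\mathbb{N}$) such that for all $0<\rho<\delta$, all $\mu$ and all $m\in\mathbb{N}$, $$|\partial_\rho F(\rho,\mu)|\ge C\rho^{\gamma-1}\qquad\text{and}\qquad |\partial_\rho^mF(\rho,\mu)|\le C_m\rho^{1-m}|\partial_\rho F(\rho,\mu)|.$$ *)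

(* Defs.v *)
(* classical reals. A complex number is represented by its
   (real part, imaginary part). *)
From Stdlib Require Import Reals Arith ZArith.
Open Scope R_scope.

Definition cnorm (x y : R) : R := sqrt (x * x + y * y).

Definition right_deriv (f : R -> R) (x l : R) : Prop :=
  forall eps, 0 < eps -> exists d, 0 < d /\
    forall h, 0 < h < d -> Rabs ((f (x + h) - f x) / h - l) < eps.

(* [smooth_on_0d delta f] : the sequence f k (k-th derivative) is a
   tower of derivatives of f 0 on [0, delta): two-sided derivatives on
   (0, delta), right derivative at 0. *)
Definition smooth_on_0d (delta : R) (f : nat -> R -> R) : Prop :=
  forall k,
    right_deriv (f k) 0 (f (S k) 0) /\
    forall r, 0 < r < delta -> derivable_pt_lim (f k) r (f (S k) r).

(* Main.v *)
Require Import Defs.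
From Stdlib Require Import Reals Arith ZArith Lra Lia List FinFun IndefiniteDescription.
Import ListNotations.
Open Scope R_scope.

Lemma cnorm_ge_l x y : Rabs x <= cnorm x y.
Proof. unfold cnorm. rewrite <- sqrt_Rsqr_abs. apply sqrt_le_1_alt. unfold Rsqr. nra. Qed.
Lemma cnorm_ge_r x y : Rabs y <= cnorm x y.
Proof. unfold cnorm. rewrite <- sqrt_Rsqr_abs. apply sqrt_le_1_alt. unfold Rsqr. nra. Qed.
Lemma cnorm_le x y : cnorm x y <= Rabs x + Rabs y.
Proof.
  unfold cnorm. rewrite <- (sqrt_Rsqr (Rabs x + Rabs y)).
  2:{ pose proof (Rabs_pos x); pose proof (Rabs_pos y); lra. }
  apply sqrt_le_1_alt. unfold Rsqr.
  pose proof (Rabs_pos x); pose proof (Rabs_pos y).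
  assert (x*x = Rabs x * Rabs x) by (rewrite <- Rabs_mult; symmetry; apply Rabs_right; nra).
  assert (y*y = Rabs y * Rabs y) by (rewrite <- Rabs_mult; symmetry; apply Rabs_right; nra).
  nra.
Qed.
Lemma cnorm_pos x y : 0 <= cnorm x y.
Proof. unfold cnorm. apply sqrt_pos. Qed.

Lemma powerRZ_eq r m : 0 < r -> powerRZ r (1 - Z.of_nat m) = r / r ^ m.
Proof.
  intros Hr. replace (1 - Z.of_nat m)%Z with (1 + - Z.of_nat m)%Z by lia.
  rewrite powerRZ_add by lra. rewrite powerRZ_neg'. rewrite <- pow_powerRZ.
  simpl. unfold Rdiv. ring.
Qed.

Definition rcont (f : R -> R) := forall e, 0 < e -> exists eta, 0 < eta /\
  forall t, 0 < t < eta -> Rabs (f t - f 0) < e.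

Lemma rcont_of (f : R -> R) l :
  (forall eps, 0 < eps -> exists d, 0 < d /\ forall h, 0 < h < d -> Rabs ((f (0 + h) - f 0) / h - l) < eps) -> rcont f.
Proof.
  intros H e He. destruct (H 1 ltac:(lra)) as [d [Hd Hh]].
  pose proof (Rabs_pos l).
  exists (Rmin d (e / (Rabs l + 1))). split.
  { apply Rmin_glb_lt; auto. apply Rdiv_lt_0_compat; lra. }
  intros t [Ht1 Ht2]. 
  assert (t < d) by (eapply Rlt_le_trans; [exact Ht2| apply Rmin_l]).
  assert (t < e / (Rabs l + 1)) by (eapply Rlt_le_trans; [exact Ht2| apply Rmin_r]).
  specialize (Hh t (conj Ht1 H1)). rewrite Rplus_0_l in Hh.
  assert (Rabs ((f t - f 0)/t) < Rabs l + 1).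
  { pose proof (Rabs_triang ((f t - f 0) / t - l) l).
    replace ((f t - f 0) / t - l + l) with ((f t - f 0)/t) in H3 by ring. lra. }
  replace (f t - f 0) with (((f t - f 0)/t) * t) by (field; lra).
  rewrite Rabs_mult, (Rabs_right t) by lra.
  apply Rmult_lt_compat_r with (r:=Rabs l + 1) in H2; [|lra].
  unfold Rdiv in H2. rewrite Rmult_assoc, Rinv_l in H2 by lra.
  nra.
Qed.

Lemma rcont_deriv f l : derivable_pt_lim f 0 l -> rcont f.
Proof.
  intros H. apply rcont_of with l. intros eps He. destruct (H eps He) as [d Hd].
  exists d. split. apply cond_pos. intros h [h1 h2]. apply Hd. lra.
  rewrite Rabs_right; lra.
Qed.

Lemma rcont_right f l : right_deriv f 0 l -> rcont f.
Proof. intros H. apply rcont_of with l. exact H. Qed.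

Lemma L_int (h h' : R -> R) r K d :
  0 <= K -> rcont h -> h 0 = 0 ->
  (forall c, 0 < c < r -> derivable_pt_lim h c (h' c)) ->
  (forall c, 0 < c < r -> Rabs (h' c) <= K * c ^ d) ->
  forall t, 0 < t < r -> Rabs (h t) <= K * t ^ (S d).
Proof.
  intros HK Hc H0 Hd Hb t Ht.
  destruct (Rle_or_lt (Rabs (h t)) (K * t ^ S d)) as [|Hlt]; auto. exfalso.
  set (e := Rabs (h t) - K * t ^ S d).
  destruct (Hc e ltac:(unfold e; lra)) as [eta [Heta Hh]].
  set (eps := Rmin (eta/2) (t/2)).
  assert (Heps1 : eps <= eta/2) by apply Rmin_l.
  assert (Heps2 : eps <= t/2) by apply Rmin_r.
  assert (Heps0 : 0 < eps) by (apply Rmin_glb_lt; lra).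
  destruct (MVT_abs h h' eps t) as [c [Hc1 Hc2]].
  { intros c Hc'. rewrite Rmin_left, Rmax_right in Hc' by lra. apply Hd. lra. }
  rewrite Rmin_left, Rmax_right in Hc2 by lra.
  specialize (Hh eps ltac:(lra)). rewrite H0, Rminus_0_r in Hh.
  assert (Rabs (h' c) <= K * t ^ d).
  { eapply Rle_trans. apply Hb. lra. apply Rmult_le_compat_l; auto. apply pow_incr. lra. }
  rewrite Rabs_right with (r := t - eps) in Hc1 by lra.
  pose proof (Rabs_triang_inv (h t) (h eps)).
  simpl in Hlt. unfold e in Hh. simpl in Hh.
  pose proof (pow_le t d ltac:(lra)).
  pose proof (Rabs_pos (h' c)).
  assert (Rabs (h' c) * (t - eps) <= K * t^d * t) by nra.
  lra.
Qed.

Fixpoint sumn (d : nat) (g : nat -> R) : R :=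
  match d with O => 0 | S d' => sumn d' g + g d' end.

Lemma sumn_ext d g1 g2 : (forall l, (l < d)%nat -> g1 l = g2 l) -> sumn d g1 = sumn d g2.
Proof. induction d; simpl; intros H; auto. rewrite IHd by (intros; apply H; lia). rewrite H by lia. auto. Qed.

Lemma sumn_le d g1 g2 : (forall l, (l < d)%nat -> g1 l <= g2 l) -> sumn d g1 <= sumn d g2.
Proof. induction d; simpl; intros H. lra. pose proof (IHd ltac:(intros; apply H; lia)). pose proof (H d ltac:(lia)). lra. Qed.

Lemma sumn_abs d g : Rabs (sumn d g) <= sumn d (fun l => Rabs (g l)).
Proof. induction d; simpl. rewrite Rabs_R0; lra. eapply Rle_trans. apply Rabs_triang. lra. Qed.

Lemma sumn_cte d c : sumn d (fun _ => c) = INR d * c.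
Proof. induction d; simpl sumn. simpl; ring. rewrite IHd, S_INR. ring. Qed.

Definition Tay (f : nat -> R -> R) k d t := sumn d (fun l => f (k + l)%nat 0 * t ^ l / INR (fact l)).

Lemma Tay_deriv f k d t : derivable_pt_lim (Tay f k (S d)) t (Tay f (S k) d t).
Proof.
  revert t. induction d; intros t.
  - unfold Tay. simpl. 
    apply derivable_pt_lim_ext with (f := fun _ => f (k+0)%nat 0 * 1 / 1).
    { intros; simpl; ring. } apply derivable_pt_lim_const.
  - unfold Tay at 1. simpl sumn. fold (Tay f k (S d)).
    replace (Tay f (S k) (S d) t) with (Tay f (S k) d t + f (k + S d)%nat 0 * (INR (S d) * t ^ d) / INR (fact (S d))).
    2:{ unfold Tay. simpl sumn. f_equal. replace (S k + d)%nat with (k + S d)%nat by lia. replace (S (k + d)) with (k + S d)%nat by lia.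
        rewrite fact_simpl, mult_INR. field. split; apply not_0_INR; try lia. apply fact_neq_0. }
    apply derivable_pt_lim_plus. apply IHd.
    unfold Rdiv.
    apply derivable_pt_lim_ext with (f := fun t => (f (k + S d)%nat 0 * / INR (fact (S d))) * t ^ (S d)).
    { intros. change (fact d + d * fact d)%nat with (fact (S d)). simpl pow. ring. }
    replace (f (k + S d)%nat 0 * (INR (S d) * t ^ d) * / INR (fact (S d))) with
      ((f (k + S d)%nat 0 * / INR (fact (S d))) * (INR (S d) * t ^ (pred (S d)))) by (simpl; ring).
    apply derivable_pt_lim_scal. apply derivable_pt_lim_pow.
Qed.

Lemma Tay_0 f k d : Tay f k (S d) 0 = f k 0.
Proof.
  induction d. unfold Tay; simpl. rewrite Nat.add_0_r. field.
  unfold Tay in *. simpl sumn in *. rewrite IHd. unfold Rdiv. ring.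
Qed.

Lemma taylor (delta : R) (f : nat -> R -> R) (N : nat) (B : R) :
  0 <= B -> smooth_on_0d delta f -> (forall r, 0 < r < delta -> Rabs (f N r) <= B) ->
  forall d k, (k + d = N)%nat -> forall t, 0 < t < delta -> Rabs (f k t - Tay f k d t) <= B * t ^ d.
Proof.
  intros HB Hs Hb d. induction d; intros k Hk t Ht.
  - rewrite Nat.add_0_r in Hk; subst. unfold Tay; simpl. rewrite Rminus_0_r, Rmult_1_r. auto.
  - apply (L_int (fun t => f k t - Tay f k (S d) t) (fun t => f (S k) t - Tay f (S k) d t) delta B d); auto.
    + intros e He. destruct (Hs k) as [Hr _].
      destruct (rcont_right _ _ Hr (e/2) ltac:(lra)) as [e1 [He1 H1]].
      destruct (rcont_deriv _ _ (Tay_deriv f k d 0) (e/2) ltac:(lra)) as [e2 [He2 H2]].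
      exists (Rmin e1 e2). split. apply Rmin_glb_lt; auto. intros s Hs'.
      assert (s < e1) by (eapply Rlt_le_trans; [apply Hs'|apply Rmin_l]).
      assert (s < e2) by (eapply Rlt_le_trans; [apply Hs'|apply Rmin_r]).
      specialize (H1 s ltac:(lra)). specialize (H2 s ltac:(lra)).
      replace (f k s - Tay f k (S d) s - (f k 0 - Tay f k (S d) 0)) with
        ((f k s - f k 0) - (Tay f k (S d) s - Tay f k (S d) 0)) by ring.
      eapply Rle_lt_trans. apply Rabs_triang. rewrite Rabs_Ropp. lra.
    + rewrite Tay_0. ring.
    + intros c Hc. apply derivable_pt_lim_minus. apply (proj2 (Hs k)); auto. apply Tay_deriv.
    + intros c Hc. apply IHd; auto. lia.
Qed.

Fixpoint ev (cs : list R) (x : R) : R :=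
  match cs with [] => 0 | c :: cs' => c + x * ev cs' x end.

Fixpoint divl (a : R) (cs : list R) : list R :=
  match cs with
  | [] => []
  | c :: cs' => match cs' with [] => [] | _ => ev cs' a :: divl a cs' end
  end.

Lemma ev_divl a cs x : ev cs x = ev cs a + (x - a) * ev (divl a cs) x.
Proof.
  induction cs as [|c cs IH]. simpl; ring.
  destruct cs as [|c' cs'].
  - simpl. ring.
  - change (divl a (c :: c' :: cs')) with (ev (c' :: cs') a :: divl a (c' :: cs')).
    change (ev (c :: c' :: cs') x) with (c + x * ev (c' :: cs') x).
    rewrite IH. simpl. ring.
Qed.

Lemma divl_length a c cs : length (divl a (c :: cs)) = length cs.
Proof. revert c. induction cs; intros; simpl; auto. f_equal. apply (IHcs a0). Qed.

Lemma recover a B cs : cs <> [] -> Forall (fun b => Rabs b <= B) (divl a cs) ->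
  Rabs (ev cs a) <= B -> Forall (fun c => Rabs c <= (1 + Rabs a) * B) cs.
Proof.
  induction cs as [|c cs IH]; intros Hne Hf He. congruence.
  assert (HB : 0 <= B) by (pose proof (Rabs_pos (ev (c::cs) a)); lra).
  pose proof (Rabs_pos a).
  destruct cs as [|c' cs'].
  - constructor; [|constructor]. simpl in He. rewrite Rmult_0_r, Rplus_0_r in He. nra.
  - change (divl a (c :: c' :: cs')) with (ev (c' :: cs') a :: divl a (c' :: cs')) in Hf.
    inversion Hf; subst. constructor.
    + change (ev (c :: c' :: cs') a) with (c + a * ev (c' :: cs') a) in He.
      replace c with ((c + a * ev (c' :: cs') a) - a * ev (c' :: cs') a) by ring.
      eapply Rle_trans. apply Rabs_triang. rewrite Rabs_Ropp, Rabs_mult.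
      assert (Rabs a * Rabs (ev (c' :: cs') a) <= Rabs a * B) by (apply Rmult_le_compat_l; auto).
      nra.
    + apply IH; auto. congruence.
Qed.

Fixpoint sumL (l : list R) : R := match l with [] => 0 | x :: l' => x + sumL l' end.

Lemma sumL_ge l x : Forall (fun y => 0 <= y) l -> In x l -> x <= sumL l.
Proof.
  induction l; simpl; intros Hf Hi. contradiction. inversion Hf; subst.
  assert (0 <= sumL l). { clear -H2. induction l; simpl. lra. inversion H2; subst. pose proof (IHl H3). lra. }
  destruct Hi. subst. lra. pose proof (IHl H2 H0). lra.
Qed.

Lemma poly_bound pts : NoDup pts -> exists K, 0 <= K /\ forall cs, length cs = length pts ->
  forall M, (forall x, In x pts -> Rabs (ev cs x) <= M) -> Forall (fun c => Rabs c <= K * M) cs.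
Proof.
  induction pts as [|a pts IH]; intros Hnd.
  - exists 0. split. lra. intros cs Hl M _. destruct cs; simpl in Hl; try discriminate. constructor.
  - apply NoDup_cons_iff in Hnd. destruct Hnd as [Hna Hnd].
    destruct (IH Hnd) as [K' [HK' HK]].
    set (D := sumL (map (fun x => / Rabs (x - a)) pts)).
    assert (HD : forall x, In x pts -> / Rabs (x - a) <= D).
    { intros x Hx. apply sumL_ge. apply Forall_forall. intros y Hy. apply in_map_iff in Hy.
      destruct Hy as [z [Hz Hin]]. subst y. left. apply Rinv_0_lt_compat. apply Rabs_pos_lt.
      intros Hz. apply Hna. replace a with z by lra. auto.
      apply (in_map (fun x => / Rabs (x - a))). auto. }
    assert (HD0 : 0 <= D).
    { unfold D. clear -Hna. induction pts; simpl. lra.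
      assert (0 < / Rabs (a0 - a)). { apply Rinv_0_lt_compat. apply Rabs_pos_lt.
        intros Hz. apply Hna. left. lra. }
      assert (0 <= sumL (map (fun x : R => / Rabs (x - a)) pts)). { apply IHpts. intro; apply Hna; right; auto. }
      lra. }
    exists (1 + (1 + Rabs a) * (K' * (2 * D))). split.
    { pose proof (Rabs_pos a). assert (0 <= K' * (2*D)) by nra. nra. }
    intros cs Hl M HM.
    assert (HM0 : 0 <= M) by (pose proof (HM a (or_introl eq_refl)); pose proof (Rabs_pos (ev cs a)); lra).
    destruct cs as [|c cs]. simpl in Hl; discriminate. simpl in Hl. injection Hl as Hl.
    assert (Hq : Forall (fun b => Rabs b <= K' * (2 * D * M)) (divl a (c :: cs))).
    { apply HK. rewrite divl_length. auto.
      intros x Hx. 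
      assert (Hxa : x - a <> 0). { intros Hz. apply Hna. replace a with x by lra. auto. }
      pose proof (ev_divl a (c :: cs) x) as E.
      replace (ev (divl a (c :: cs)) x) with ((ev (c :: cs) x - ev (c :: cs) a) / (x - a)) by (rewrite E; field; auto).
      unfold Rdiv. rewrite Rabs_mult, Rabs_inv.
      pose proof (HM x (or_intror Hx)). pose proof (HM a (or_introl eq_refl)).
      assert (Rabs (ev (c :: cs) x - ev (c :: cs) a) <= 2 * M).
      { unfold Rminus. eapply Rle_trans. apply Rabs_triang. rewrite Rabs_Ropp. lra. }
      pose proof (HD x Hx). pose proof (Rabs_pos (ev (c :: cs) x - ev (c :: cs) a)).
      assert (0 <= / Rabs (x - a)) by (left; apply Rinv_0_lt_compat, Rabs_pos_lt; auto).
      nra. }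
    pose proof (Rabs_pos a).
    assert (0 <= K' * (2 * D * M)) by (apply Rmult_le_pos; auto; nra).
    destruct cs as [|c' cs'].
    + constructor; [|constructor]. pose proof (HM a (or_introl eq_refl)). simpl in H1.
      rewrite Rmult_0_r, Rplus_0_r in H1. nra.
    + change (divl a (c :: c' :: cs')) with (ev (c' :: cs') a :: divl a (c' :: cs')) in Hq.
      inversion Hq; subst. constructor.
      * pose proof (HM a (or_introl eq_refl)) as Hma.
        change (ev (c :: c' :: cs') a) with (c + a * ev (c' :: cs') a) in Hma.
        replace c with ((c + a * ev (c' :: cs') a) - a * ev (c' :: cs') a) by ring.
        eapply Rle_trans. apply Rabs_triang. rewrite Rabs_Ropp, Rabs_mult.
        assert (Rabs a * Rabs (ev (c' :: cs') a) <= Rabs a * (K' * (2 * D * M))) by (apply Rmult_le_compat_l; auto).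
        nra.
      * eapply Forall_impl. 2:{ apply (recover a (K' * (2 * D * M))); auto. congruence. }
        intros y Hy. simpl in Hy. nra.
Qed.

Lemma ev_app l1 l2 s : ev (l1 ++ l2) s = ev l1 s + s ^ length l1 * ev l2 s.
Proof. induction l1; simpl. ring. rewrite IHl1. ring. Qed.

Lemma sumn_ev d c s : sumn d (fun l => c l * s ^ l) = ev (map c (seq 0 d)) s.
Proof.
  induction d. simpl; auto.
  rewrite seq_S, map_app, ev_app. simpl sumn. rewrite IHd, length_map, length_seq. simpl. ring.
Qed.

Lemma poly_coef d : exists K, 0 <= K /\ forall c M,
  (forall i, (i < d)%nat -> Rabs (sumn d (fun l => c l * INR i ^ l)) <= M) ->
  forall l, (l < d)%nat -> Rabs (c l) <= K * M.
Proof.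
  destruct (poly_bound (map INR (seq 0 d))) as [K [HK0 HK]].
  { apply FinFun.Injective_map_NoDup. intros x y; apply INR_eq. apply seq_NoDup. }
  exists K. split; auto. intros c M HM l Hl.
  specialize (HK (map c (seq 0 d))). rewrite !length_map in HK. specialize (HK eq_refl M).
  assert (Hf : Forall (fun c0 => Rabs c0 <= K * M) (map c (seq 0 d))).
  { apply HK. intros x Hx. apply in_map_iff in Hx. destruct Hx as [i [<- Hi]].
    apply in_seq in Hi. rewrite <- sumn_ev. apply HM. lia. }
  rewrite Forall_forall in Hf. apply Hf. apply in_map. apply in_seq. lia.
Qed.

Lemma fact_ge1 n : 1 <= INR (fact n).
Proof. apply (le_INR 1). pose proof (lt_O_fact n). lia. Qed.

Lemma key_real delta (f : nat -> R -> R) gamma B1 K rho N0 :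
  (2 <= gamma)%nat -> 0 <= B1 -> 0 <= K -> smooth_on_0d delta f ->
  (forall r, 0 < r < delta -> Rabs (f (S gamma) r) <= B1) -> f 1%nat 0 = 0 ->
  0 < rho < delta -> (forall t, 0 < t <= rho -> Rabs (f 1%nat t) <= N0) ->
  (forall c M, (forall i, (i < gamma)%nat -> Rabs (sumn gamma (fun l => c l * INR i ^ l)) <= M) ->
    forall l, (l < gamma)%nat -> Rabs (c l) <= K * M) ->
  forall j, (1 <= j <= gamma)%nat ->
    Rabs (f j 0) * rho ^ (j - 1) <=
      (K + 1) * INR (gamma - 1) ^ gamma * INR (fact gamma) * (N0 + B1 * rho ^ gamma).
Proof.
  intros Hg HB1 HK Hs Hb Hf10 Hrho HN0 HKp j Hj.
  set (G := INR (gamma - 1)).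
  assert (HG : 1 <= G) by (unfold G; apply (le_INR 1); lia).
  set (h := rho / G).
  assert (Hh : 0 < h) by (unfold h; apply Rdiv_lt_0_compat; lra).
  set (M := N0 + B1 * rho ^ gamma).
  assert (HN0p : 0 <= N0) by (pose proof (HN0 rho ltac:(lra)); pose proof (Rabs_pos (f 1%nat rho)); lra).
  assert (HM0 : 0 <= M) by (unfold M; pose proof (pow_le rho gamma ltac:(lra)); nra).
  set (c := fun l => f (1 + l)%nat 0 * h ^ l / INR (fact l)).
  assert (Hc : forall l, (l < gamma)%nat -> Rabs (c l) <= K * M).
  { apply HKp. intros i Hi.
    replace (sumn gamma (fun l => c l * INR i ^ l)) with (Tay f 1 gamma (INR i * h)).
    2:{ unfold Tay. apply sumn_ext. intros l _. unfold c. rewrite Rpow_mult_distr. unfold Rdiv. ring. }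
    destruct i as [|i].
    - simpl INR. rewrite Rmult_0_l. assert (Eg : gamma = S (gamma - 1)) by lia. rewrite Eg at 1. rewrite Tay_0, Hf10, Rabs_R0. auto.
    - set (t := INR (S i) * h).
      assert (Ht0 : 0 < t) by (unfold t; apply Rmult_lt_0_compat; auto; apply lt_0_INR; lia).
      assert (Ht1 : t <= rho).
      { unfold t, h. replace rho with (G * (rho / G)) at 2 by (field; lra).
        apply Rmult_le_compat_r. apply Rlt_le, Rdiv_lt_0_compat; lra. unfold G. apply le_INR. lia. }
      pose proof (taylor delta f (S gamma) B1 HB1 Hs Hb gamma 1 ltac:(lia) t ltac:(lra)) as HT.
      pose proof (HN0 t ltac:(lra)).
      assert (t ^ gamma <= rho ^ gamma) by (apply pow_incr; lra).
      replace (Tay f 1 gamma t) with (f 1%nat t - (f 1%nat t - Tay f 1 gamma t)) by ring.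
      eapply Rle_trans. unfold Rminus at 1. apply Rabs_triang. rewrite Rabs_Ropp. unfold M. nra. }
  destruct j as [|l]. lia. replace (S l - 1)%nat with l by lia.
  specialize (Hc l ltac:(lia)).
  replace (Rabs (f (S l) 0) * rho ^ l) with (Rabs (c l) * INR (fact l) * G ^ l).
  2:{ unfold c, h. unfold Rdiv. rewrite Rabs_mult, Rabs_mult. rewrite (Rabs_right (/ INR (fact l))).
      2:{ left. apply Rinv_0_lt_compat. pose proof (fact_ge1 l). lra. }
      rewrite (Rabs_right ((rho * / G) ^ l)) by (left; apply pow_lt; apply Rmult_lt_0_compat; try lra; apply Rinv_0_lt_compat; lra).
      rewrite Rpow_mult_distr, pow_inv. simpl plus. pose proof (fact_ge1 l). field. repeat split; try (apply pow_nonzero); lra. }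
  assert (H1 : INR (fact l) <= INR (fact gamma)) by (apply le_INR, fact_le; lia).
  assert (H2 : G ^ l <= G ^ gamma) by (apply Rle_pow; auto; lia).
  pose proof (fact_ge1 l). pose proof (pow_le G l ltac:(lra)).
  pose proof (Rabs_pos (c l)).
  assert (Rabs (c l) <= (K + 1) * M) by nra.
  assert (0 <= (K+1) * M) by nra.
  assert (Rabs (c l) * INR (fact l) <= (K + 1) * M * INR (fact gamma)) by (apply Rmult_le_compat; nra).

  assert (0 <= (K + 1) * M * INR (fact gamma)) by (pose proof (fact_ge1 gamma); nra).
  apply Rle_trans with ((K + 1) * M * INR (fact gamma) * G ^ gamma).
  apply Rmult_le_compat; auto. apply Rmult_le_pos; auto; lra.
  fold M. lra.
Qed.

Lemma claim2_real delta (f : nat -> R -> R) gamma B1 rho Q m :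
  (1 <= gamma)%nat -> 0 <= B1 -> smooth_on_0d delta f ->
  (forall r, 0 < r < delta -> Rabs (f (S gamma) r) <= B1) -> f 0%nat 0 = 0 ->
  0 < rho < delta ->
  (forall j, (1 <= j <= gamma)%nat -> Rabs (f j 0) * rho ^ (j - 1) <= Q) ->
  (m <= gamma)%nat ->
  Rabs (f m rho) <= (INR (S gamma) * Q + B1 * rho ^ gamma) * (rho / rho ^ m).
Proof.
  intros Hg HB1 Hs Hb Hf00 Hrho HQ Hm.
  assert (HQ0 : 0 <= Q) by (pose proof (HQ 1%nat ltac:(lia)); pose proof (Rabs_pos (f 1%nat 0)); simpl in H; nra).
  assert (Hrm : 0 < rho ^ m) by (apply pow_lt; lra).
  set (P := rho / rho ^ m).
  assert (HP : 0 < P) by (unfold P; apply Rdiv_lt_0_compat; lra).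
  set (d := (S gamma - m)%nat).
  pose proof (taylor delta f (S gamma) B1 HB1 Hs Hb d m ltac:(unfold d; lia) rho Hrho) as HT.
  assert (HR : rho ^ d = rho ^ gamma * P).
  { unfold P. apply (Rmult_eq_reg_r (rho ^ m)); [|lra]. rewrite <- pow_add.
    unfold Rdiv. rewrite Rmult_assoc, Rmult_assoc, Rinv_l, Rmult_1_r by lra.
    replace (d + m)%nat with (S gamma) by (unfold d; lia). simpl. ring. }
  assert (HTay : Rabs (Tay f m d rho) <= INR (S gamma) * Q * P).
  { unfold Tay. eapply Rle_trans. apply sumn_abs.
    eapply Rle_trans. apply sumn_le with (g2 := fun _ => Q * P).
    - intros l Hl. destruct (Nat.eq_dec (m + l) 0) as [E|E].
      + rewrite E, Hf00. unfold Rdiv. rewrite !Rmult_0_l, Rabs_R0. nra.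
      + unfold Rdiv. rewrite Rabs_mult, Rabs_mult.
        rewrite (Rabs_right (/ INR (fact l))) by (left; apply Rinv_0_lt_compat; pose proof (fact_ge1 l); lra).
        rewrite (Rabs_right (rho ^ l)) by (left; apply pow_lt; lra).
        assert (Hi : / INR (fact l) <= 1).
        { pose proof (fact_ge1 l). rewrite <- Rinv_1. apply Rinv_le_contravar; lra. }
        pose proof (HQ (m + l)%nat ltac:(unfold d in Hl; lia)) as Hq.
        assert (E2 : Rabs (f (m + l)%nat 0) * rho ^ l = Rabs (f (m + l)%nat 0) * rho ^ (m + l - 1) * P).
        { unfold P. apply (Rmult_eq_reg_r (rho ^ m)); [|lra].
          unfold Rdiv. rewrite !Rmult_assoc, Rinv_l, Rmult_1_r by lra.
          rewrite <- pow_add. rewrite <- (pow_1 rho) at 3. rewrite <- pow_add.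
          replace (m + l - 1 + 1)%nat with (l + m)%nat by lia. auto. }
        pose proof (Rabs_pos (f (m + l)%nat 0)). pose proof (pow_le rho l ltac:(lra)).
        assert (0 < / INR (fact l)) by (apply Rinv_0_lt_compat; pose proof (fact_ge1 l); lra).
        assert (Rabs (f (m + l)%nat 0) * rho ^ l <= Q * P) by (rewrite E2; apply Rmult_le_compat_r; lra).
        apply Rle_trans with (Rabs (f (m + l)%nat 0) * rho ^ l); auto. rewrite <- (Rmult_1_r (Rabs (f (m + l)%nat 0) * rho ^ l)) at 2. apply Rmult_le_compat_l; auto. apply Rmult_le_pos; auto.
    - rewrite sumn_cte. assert (INR d <= INR (S gamma)) by (apply le_INR; unfold d; lia).
      assert (0 <= Q * P) by nra. nra. }
  replace (f m rho) with ((f m rho - Tay f m d rho) + Tay f m d rho) by ring.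
  eapply Rle_trans. apply Rabs_triang. rewrite HR in HT. fold P. nra.
Qed.

Lemma pow_le_dec x n m : 0 <= x <= 1 -> (n <= m)%nat -> x ^ m <= x ^ n.
Proof.
  intros Hx Hnm. replace m with (n + (m - n))%nat by lia. rewrite pow_add.
  pose proof (pow_le x n ltac:(lra)).
  assert (x ^ (m - n) <= 1). { induction (m - n)%nat; simpl. lra. pose proof (pow_le x n0 ltac:(lra)). nra. }
  nra.
Qed.

Theorem mainTheorem3 (M : Type) (gamma : nat) (delta : R)
  (u v : nat -> M -> R -> R)
  (Hgamma : (2 <= gamma)%nat)
  (Hdelta : 0 < delta)
  (Hsmooth : forall mu, smooth_on_0d delta (fun k => u k mu)
                     /\ smooth_on_0d delta (fun k => v k mu))
  (F1 : forall mu, u 0%nat mu 0 = 0 /\ v 0%nat mu 0 = 0 /\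
                   u 1%nat mu 0 = 0 /\ v 1%nat mu 0 = 0)
  (F2 : exists C, 0 < C /\ forall mu,
          sum_f 2 gamma (fun j => cnorm (u j mu 0) (v j mu 0) / INR (fact j)) >= C)
  (F3 : forall mu r1 r2, 0 < r1 -> r1 <= r2 -> r2 < delta ->
          cnorm (u 1%nat mu r1) (v 1%nat mu r1) <= cnorm (u 1%nat mu r2) (v 1%nat mu r2))
  (F4 : forall k, exists B, forall mu r, 0 < r < delta ->
          cnorm (u k mu r) (v k mu r) <= B) :
  exists delta1, 0 < delta1 <= delta /\
  exists C (Cm : nat -> R), 0 < C /\ (forall m, 0 < Cm m) /\
    forall mu r, 0 < r < delta1 ->
      cnorm (u 1%nat mu r) (v 1%nat mu r) >= C * r ^ (gamma - 1) /\
      forall m, cnorm (u m mu r) (v m mu r)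
                <= Cm m * powerRZ r (1 - Z.of_nat m) * cnorm (u 1%nat mu r) (v 1%nat mu r).
Proof.
  destruct F2 as [C0 [HC0 HF2]].
  destruct (F4 (S gamma)) as [B0 HB0].
  set (B1 := Rabs B0 + 1).
  assert (HB1 : 0 < B1) by (unfold B1; pose proof (Rabs_pos B0); lra).
  assert (HB1u : forall mu r, 0 < r < delta -> Rabs (u (S gamma) mu r) <= B1).
  { intros mu r Hr. pose proof (HB0 mu r Hr). pose proof (cnorm_ge_l (u (S gamma) mu r) (v (S gamma) mu r)).
    pose proof (Rle_abs B0). unfold B1; lra. }
  assert (HB1v : forall mu r, 0 < r < delta -> Rabs (v (S gamma) mu r) <= B1).
  { intros mu r Hr. pose proof (HB0 mu r Hr). pose proof (cnorm_ge_r (u (S gamma) mu r) (v (S gamma) mu r)).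
    pose proof (Rle_abs B0). unfold B1; lra. }
  set (Bf := fun k => Rabs (proj1_sig (constructive_indefinite_description _ (F4 k)))).
  assert (HBf : forall k mu r, 0 < r < delta -> cnorm (u k mu r) (v k mu r) <= Bf k).
  { intros k mu r Hr. unfold Bf. destruct (constructive_indefinite_description _ (F4 k)) as [b Hb].
    simpl. pose proof (Hb mu r Hr). pose proof (Rle_abs b). lra. }
  assert (HBf0 : forall k, 0 <= Bf k) by (intros; apply Rabs_pos).
  destruct (poly_coef gamma) as [K [HK0 HK]].
  set (K3 := (K + 1) * INR (gamma - 1) ^ gamma * INR (fact gamma)).
  assert (HK3 : 0 < K3).
  { unfold K3. assert (1 <= INR (gamma - 1)) by (apply (le_INR 1); lia).
    pose proof (pow_lt (INR (gamma - 1)) gamma ltac:(lra)). pose proof (fact_ge1 gamma).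
    apply Rmult_lt_0_compat; [apply Rmult_lt_0_compat|]; lra. }
  set (N1 := INR (S (gamma - 2))).
  assert (HN1 : 1 <= N1) by (unfold N1; apply (le_INR 1); lia).
  set (K4 := 2 * K3 * N1).
  assert (HK4 : 0 < K4) by (unfold K4; nra).
  set (C := C0 / (2 * K4)).
  assert (HC : 0 < C) by (unfold C; apply Rdiv_lt_0_compat; lra).
  set (Cu := 2 * (2 * INR (S gamma) * K3 + 1)).
  assert (HCu : 0 < Cu) by (unfold Cu; pose proof (pos_INR (S gamma)); nra).
  set (Cm := fun m => Cu + Bf m / C).
  set (delta1 := Rmin delta (Rmin 1 (Rmin (C0 / (2 * K4 * B1)) (C / B1)))).
  assert (Hd1 : delta1 <= delta) by apply Rmin_l.
  assert (Hd2 : delta1 <= 1) by (eapply Rle_trans; [apply Rmin_r|apply Rmin_l]).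
  assert (Hd3 : delta1 <= C0 / (2 * K4 * B1))
    by (eapply Rle_trans; [apply Rmin_r|]; eapply Rle_trans; [apply Rmin_r|apply Rmin_l]).
  assert (Hd4 : delta1 <= C / B1)
    by (eapply Rle_trans; [apply Rmin_r|]; eapply Rle_trans; [apply Rmin_r|apply Rmin_r]).
  assert (Hd0 : 0 < delta1).
  { unfold delta1. repeat apply Rmin_glb_lt; try lra; apply Rdiv_lt_0_compat; nra. }
  exists delta1. split. lra.
  exists C, Cm. split. auto. split.
  { intros m. unfold Cm. pose proof (HBf0 m). assert (0 <= Bf m / C) by (apply Rmult_le_pos; auto; left; apply Rinv_0_lt_compat; auto). lra. }
  intros mu r Hr.
  destruct (Hsmooth mu) as [Hsu Hsv]. destruct (F1 mu) as [u00 [v00 [u10 v10]]].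
  set (N := cnorm (u 1%nat mu r) (v 1%nat mu r)).
  set (Mb := N + B1 * r ^ gamma).
  assert (Hrd : 0 < r < delta) by lra.
  assert (HNu : forall t, 0 < t <= r -> Rabs (u 1%nat mu t) <= N).
  { intros t Ht. eapply Rle_trans. apply cnorm_ge_l. apply F3; lra. }
  assert (HNv : forall t, 0 < t <= r -> Rabs (v 1%nat mu t) <= N).
  { intros t Ht. eapply Rle_trans. apply cnorm_ge_r. apply F3; lra. }
  pose proof (key_real delta (fun k => u k mu) gamma B1 K r N Hgamma ltac:(lra) HK0 Hsu (HB1u mu) u10 Hrd HNu HK) as Ku.
  pose proof (key_real delta (fun k => v k mu) gamma B1 K r N Hgamma ltac:(lra) HK0 Hsv (HB1v mu) v10 Hrd HNv HK) as Kv.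
  fold K3 Mb in Ku, Kv.
  assert (HN0 : 0 <= N) by apply cnorm_pos.
  assert (Hrg : 0 < r ^ (gamma - 1)) by (apply pow_lt; lra).
  assert (Hrg2 : r ^ gamma = r * r ^ (gamma - 1)).
  { replace gamma with (S (gamma - 1)) at 1 by lia. reflexivity. }
  assert (Hcl : C0 * r ^ (gamma - 1) <= K4 * Mb).
  { pose proof (HF2 mu) as HS. unfold sum_f in HS.
    set (g := fun j => cnorm (u j mu 0) (v j mu 0) / INR (fact j)) in HS.
    assert (Hterm : forall x, (x <= gamma - 2)%nat -> g (x + 2)%nat * r ^ (gamma - 1) <= 2 * K3 * Mb).
    { intros x Hx. set (j := (x + 2)%nat).
      assert (Hj : (1 <= j <= gamma)%nat) by (unfold j; lia).
      pose proof (Ku j Hj). pose proof (Kv j Hj).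
      assert (g j <= Rabs (u j mu 0) + Rabs (v j mu 0)).
      { unfold g. pose proof (cnorm_le (u j mu 0) (v j mu 0)). pose proof (cnorm_pos (u j mu 0) (v j mu 0)).
        pose proof (fact_ge1 j). unfold Rdiv.
        assert (/ INR (fact j) <= 1) by (rewrite <- Rinv_1; apply Rinv_le_contravar; lra).
        assert (0 < / INR (fact j)) by (apply Rinv_0_lt_compat; lra). nra. }
      assert (0 <= g j) by (unfold g; apply Rmult_le_pos; [apply cnorm_pos| left; apply Rinv_0_lt_compat; pose proof (fact_ge1 j); lra]).
      assert (r ^ (gamma - 1) <= r ^ (j - 1)) by (apply pow_le_dec; [lra|lia]).
      pose proof (pow_le r (j - 1) ltac:(lra)).
      apply Rle_trans with (g j * r ^ (j - 1)). apply Rmult_le_compat_l; auto.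
      apply Rle_trans with ((Rabs (u j mu 0) + Rabs (v j mu 0)) * r ^ (j - 1)).
      apply Rmult_le_compat_r; auto. cbv beta in *. lra. }
    pose proof (sum_Rle _ _ _ Hterm) as HSum. rewrite sum_cte in HSum. rewrite <- scal_sum in HSum.
    fold N1 in HSum. unfold K4. change (sum_f_R0 (fun i : nat => g (i + 2)%nat) (gamma - 2) >= C0) in HS. nra. }
  assert (HMb : Mb = N + B1 * r ^ gamma) by reflexivity.
  assert (Hsmall : K4 * (B1 * r ^ gamma) <= C0 / 2 * r ^ (gamma - 1)).
  { rewrite Hrg2. assert (r * (2 * K4 * B1) <= C0).
    { assert (r <= C0 / (2 * K4 * B1)) by lra. apply (Rmult_le_compat_r (2 * K4 * B1)) in H; [|nra].
      assert (C0 / (2 * K4 * B1) * (2 * K4 * B1) = C0) by (field; nra). lra. }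
    nra. }
  assert (Claim1 : C * r ^ (gamma - 1) <= N).
  { unfold C. assert (C0 / 2 * r ^ (gamma - 1) <= K4 * N) by (rewrite HMb in Hcl; nra).
    apply (Rmult_le_reg_l K4); auto. unfold Rdiv. replace (K4 * (C0 * / (2 * K4) * r ^ (gamma - 1))) with (C0 / 2 * r ^ (gamma - 1)) by (field; lra). auto. }
  assert (HBN : B1 * r ^ gamma <= N).
  { rewrite Hrg2. assert (B1 * r <= C).
    { assert (r <= C / B1) by lra. apply (Rmult_le_compat_l B1) in H; [|lra].
      assert (B1 * (C / B1) = C) by (field; nra). lra. }
    nra. }
  split. lra.
  intros m. rewrite powerRZ_eq by lra.
  assert (Hrm : 0 < r ^ m) by (apply pow_lt; lra).
  set (P := r / r ^ m).
  assert (HP : 0 < P) by (unfold P; apply Rdiv_lt_0_compat; lra).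
  assert (HBC : 0 <= Bf m / C * P * N) by (pose proof (HBf0 m); apply Rmult_le_pos; [apply Rmult_le_pos|]; auto; try lra; apply Rmult_le_pos; auto; left; apply Rinv_0_lt_compat; auto).
  unfold Cm. rewrite Rmult_plus_distr_r, Rmult_plus_distr_r.
  destruct (le_lt_dec m gamma) as [Hm|Hm].
  - pose proof (claim2_real delta (fun k => u k mu) gamma B1 r (K3 * Mb) m ltac:(lia) ltac:(lra) Hsu (HB1u mu) u00 Hrd Ku Hm) as Cu1.
    pose proof (claim2_real delta (fun k => v k mu) gamma B1 r (K3 * Mb) m ltac:(lia) ltac:(lra) Hsv (HB1v mu) v00 Hrd Kv Hm) as Cv1.
    cbv beta in Cu1, Cv1. fold P in Cu1, Cv1.
    pose proof (cnorm_le (u m mu r) (v m mu r)).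
    assert (INR (S gamma) * (K3 * Mb) + B1 * r ^ gamma <= (2 * INR (S gamma) * K3 + 1) * N).
    { pose proof (pos_INR (S gamma)). rewrite HMb.
      assert (INR (S gamma) * K3 * (B1 * r^gamma) <= INR (S gamma) * K3 * N) by (apply Rmult_le_compat_l; nra). nra. }
    assert ((INR (S gamma) * (K3 * Mb) + B1 * r ^ gamma) * P <= (2 * INR (S gamma) * K3 + 1) * N * P)
      by (apply Rmult_le_compat_r; lra).
    unfold Cu. lra.
  - pose proof (HBf m mu r Hrd).
    assert (C <= P * N).
    { assert (r ^ m <= r ^ gamma) by (apply pow_le_dec; [lra|lia]).
      assert (C * r ^ gamma <= r * N) by (rewrite Hrg2; nra).
      unfold P. apply (Rmult_le_reg_r (r ^ m)); auto. unfold Rdiv.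
      replace (r * / r ^ m * N * r ^ m) with (r * N) by (field; lra). nra. }
    assert (Bf m <= Bf m / C * P * N).
    { assert (Hq : 0 <= Bf m / C) by (apply Rmult_le_pos; auto; left; apply Rinv_0_lt_compat; auto).
      assert (Bf m / C * C <= Bf m / C * (P * N)) by (apply Rmult_le_compat_l; auto).
      assert (Bf m / C * C = Bf m) by (field; lra).
      rewrite Rmult_assoc. lra. }
    assert (0 <= Cu * P * N) by (apply Rmult_le_pos; auto; nra).
    lra.
Qed.
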